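(* Let $T=(L,R,\tau,\sigma)$ be a rewrite rule and $m:L\to G$ a matching with respect to $T$. Let $(\mathcal{H},\tau_1,\delta)$ be a pushout of $\tau$ and $|m|$ in the category of sets ($\tau_1:|G|\to\mathcal{H}$, $\delta:|R|\to\mathcal{H}$, $\delta\circ\tau=\tau_1\circ|m|$), let $\Gamma=|G|-|m(L)|$, $\Sigma=\mathrm{dom}(\sigma)$, $\Delta=|R|-\Sigma$, and let $\sigma_1:\mathcal{H}\rightharpoonup|G|$ be the unique partial function with domain $\delta(\Sigma)$ such that $|m|\circ\sigma=\sigma_1\circ\delta$ on $\Sigma$. Let $H$ be the graph with set of nodes $\mathcal{H}$ determined by requiring that $\tau_1$ is strictly graphic on $\Gamma$, that $\delta$ is strictly graphic on $\Delta$, and that each node $n_1\in\delta(\Sigma)$ is a $\tau_1$-clone of $\sigma_1(n_1)$. Then $\delta$ underlies a graph morphism $d:R\to H$, and $(H,\tau_1,d,\sigma_1)$ is a cloning pushout of $T$ and $m$, i.e. an initial object of the category of cloning cones over $T$ and $m$.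
   Context: A signature $\Omega$ assigns an arity to each symbol; for a function $f$, $f^*$ acts letterwise on strings. A termgraph (graph) $G$ has node set $|G|$, a subset of labeled nodes, a labeling $\mathcal{L}_G$ of labeled nodes by symbols of $\Omega$ and a successor function $\mathcal{S}_G$ giving each labeled node a string of nodes of length the arity of its label. A graph morphism $g:G\to H$ is a function $|G|\to|H|$ sending labeled nodes to labeled nodes with $\mathcal{L}_H(g(n))=\mathcal{L}_G(n)$ and $\mathcal{S}_H(g(n))=g^*(\mathcal{S}_G(n))$ for each labeled $n$; $|g|$ is its underlying function. A function $\gamma:|G|\to|H|$ is graphic at a node $n$ if $n$ is unlabeled or both $n,\gamma(n)$ are labeled with $\mathcal{L}_H(\gamma(n))=\mathcal{L}_G(n)$, $\mathcal{S}_H(\gamma(n))=\gamma^*(\mathcal{S}_G(n))$; strictly graphic at $n$ if both $n,\gamma(n)$ are unlabeled or both are labeled with these equalities; (strictly) graphic on a set if so at each node of it. For $\tau:|G|\to|H|$, a node $p\in|H|$ is a $\tau$-clone of $q\in|G|$ if $p$ is labeled iff $q$ is, and then $\mathcal{L}_H(p)=\mathcal{L}_G(q)$ and $\mathcal{S}_H(p)=\tau^*(\mathcal{S}_G(q))$. A rewrite rule is $(L,R,\tau,\sigma)$ with $L,R$ graphs, $\tau:|L|\to|R|$ a function, $\sigma:|R|\rightharpoonup|L|$ a partial function such that each $n\in\mathrm{dom}(\sigma)$ is unlabeled or a $\tau$-clone of $\sigma(n)$. A morphism of rewrite rules $(L,R,\tau,\sigma)\to(L_1,R_1,\tau_1,\sigma_1)$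 is a pair of graph morphisms $m:L\to L_1$, $d:R\to R_1$ with $|d|\circ\tau=\tau_1\circ|m|$, $d(\mathrm{dom}(\sigma))\subseteq\mathrm{dom}(\sigma_1)$ and $|m|\circ\sigma=\sigma_1\circ|d|$ on $\mathrm{dom}(\sigma)$. A matching with respect to $T=(L,R,\tau,\sigma)$ is a graph morphism $m:L\to G$ such that whenever $m(p)=m(p')$ for distinct $p,p'\in|L|$, then $\tau(p),\tau(p')\in\mathrm{dom}(\sigma)$ and $\sigma(\tau(p))=\sigma(\tau(p'))$. A cloning cone over $T$ and $m:L\to G$ is a tuple $(H,\tau_1,d,\sigma_1)$ with $H$ a graph, $\tau_1:|G|\to|H|$ a function, $d:R\to H$ a graph morphism, $\sigma_1:|H|\rightharpoonup|G|$ a partial function, such that $(G,H,\tau_1,\sigma_1)$ is a rewrite rule, $(m,d)$ is a morphism of rewrite rules from $T$ to $(G,H,\tau_1,\sigma_1)$, $\tau_1$ is graphic on $|G|-|m(L)|$, and every $n_1\in\mathrm{dom}(\sigma_1)$ is a $\tau_1$-clone of $\sigma_1(n_1)$. A morphism of cloning cones $(H,\tau_1,d,\sigma_1)\to(H',\tau_1',d',\sigma_1')$ is a graph morphism $h:H\to H'$ with $|h|\circ\tau_1=\tau_1'$, $h\circ d=d'$, $h(\mathrm{dom}(\sigma_1))\subseteq\mathrm{dom}(\sigma_1')$ and $\sigma_1'\circ|h|=\sigma_1$ on $\mathrm{dom}(\sigma_1)$; this defines the category of cloning cones over $T$ and $m$. *)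

(* Defs.v *)
From Stdlib Require Import List.
Import ListNotations.


Record signature := Signature { sym : Type ; arity : sym -> nat }.

(* A termgraph: node set, and for each node either None (unlabeled) or
   Some (label, successor string) with the string of length the arity. *)
Record graph (S : signature) := Graph {
  node : Type ;
  lab : node -> option (sym S * list node) ;
  lab_ok : forall n f s, lab n = Some (f, s) -> length s = arity S f
}.
Arguments node {S} g.
Arguments lab {S} g _.
Arguments lab_ok {S} g _ _ _ _.

Section Defs.
Context {S : signature}.

Definition relab {A B : Type} (gamma : A -> B)
  (o : option (sym S * list A)) : option (sym S * list B) :=
  match o with
  | None => None
  | Some (f, s) => Some (f, map gamma s)
  end.

Definition labeled {G : graph S} (n : node G) : Prop := lab G n <> None.

Definition graphic_at {G H : graph S} (gamma : node G -> node H) (n : node G) : Prop :=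
  lab G n = None \/ lab H (gamma n) = relab gamma (lab G n).

Definition strictly_graphic_at {G H : graph S} (gamma : node G -> node H)
  (n : node G) : Prop :=
  lab H (gamma n) = relab gamma (lab G n).

Definition clone {G H : graph S} (tau : node G -> node H)
  (p : node H) (q : node G) : Prop :=
  lab H p = relab tau (lab G q).

Definition is_graph_morphism {G H : graph S} (g : node G -> node H) : Prop :=
  forall n, graphic_at g n.

Definition is_rewrite_rule {L R : graph S} (tau : node L -> node R)
  (sigma : node R -> option (node L)) : Prop :=
  forall n q, sigma n = Some q -> lab R n = None \/ clone tau n q.

Definition is_rule_morphism {L R : graph S} (tau : node L -> node R)
  (sigma : node R -> option (node L))
  {L1 R1 : graph S} (tau1 : node L1 -> node R1)
  (sigma1 : node R1 -> option (node L1))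
  (m : node L -> node L1) (d : node R -> node R1) : Prop :=
  is_graph_morphism m /\ is_graph_morphism d /\
  (forall p, d (tau p) = tau1 (m p)) /\
  (* d(dom sigma) ⊆ dom sigma1 and m ∘ sigma = sigma1 ∘ d on dom sigma *)
  (forall n q, sigma n = Some q -> sigma1 (d n) = Some (m q)).

Definition is_matching {L R : graph S} (tau : node L -> node R)
  (sigma : node R -> option (node L)) {G : graph S} (m : node L -> node G) : Prop :=
  is_graph_morphism m /\
  forall p p', p <> p' -> m p = m p' ->
    exists q, sigma (tau p) = Some q /\ sigma (tau p') = Some q.

Definition is_cloning_cone {L R : graph S} (tau : node L -> node R)
  (sigma : node R -> option (node L)) {G : graph S} (m : node L -> node G)
  {H : graph S} (tau1 : node G -> node H) (d : node R -> node H)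
  (sigma1 : node H -> option (node G)) : Prop :=
  is_rewrite_rule tau1 sigma1 /\
  is_rule_morphism tau sigma tau1 sigma1 m d /\
  (forall n, ~ (exists p, m p = n) -> graphic_at tau1 n) /\
  (forall n1 q, sigma1 n1 = Some q -> clone tau1 n1 q).

Definition is_cone_morphism {G : graph S} {R : graph S}
  {H : graph S} (tau1 : node G -> node H) (d : node R -> node H)
  (sigma1 : node H -> option (node G))
  {H' : graph S} (tau1' : node G -> node H') (d' : node R -> node H')
  (sigma1' : node H' -> option (node G)) (h : node H -> node H') : Prop :=
  is_graph_morphism h /\
  (forall n, h (tau1 n) = tau1' n) /\
  (forall r, h (d r) = d' r) /\
  (forall n q, sigma1 n = Some q -> sigma1' (h n) = Some q).

Definition is_cloning_pushout {L R : graph S} (tau : node L -> node R)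
  (sigma : node R -> option (node L)) {G : graph S} (m : node L -> node G)
  {H : graph S} (tau1 : node G -> node H) (d : node R -> node H)
  (sigma1 : node H -> option (node G)) : Prop :=
  is_cloning_cone tau sigma m tau1 d sigma1 /\
  forall (H' : graph S) (tau1' : node G -> node H') (d' : node R -> node H')
         (sigma1' : node H' -> option (node G)),
    is_cloning_cone tau sigma m tau1' d' sigma1' ->
    (exists h, is_cone_morphism tau1 d sigma1 tau1' d' sigma1' h) /\
    (forall h h', is_cone_morphism tau1 d sigma1 tau1' d' sigma1' h ->
                  is_cone_morphism tau1 d sigma1 tau1' d' sigma1' h' ->
                  forall n, h n = h' n).

Definition is_set_pushout {A B C X : Type} (tau : A -> B) (mu : A -> C)
  (tau1 : C -> X) (delta : B -> X) : Prop :=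
  (forall a, delta (tau a) = tau1 (mu a)) /\
  forall (Y : Type) (f : C -> Y) (g : B -> Y),
    (forall a, g (tau a) = f (mu a)) ->
    (exists u : X -> Y, (forall c, u (tau1 c) = f c) /\ (forall b, u (delta b) = g b)) /\
    (forall u u' : X -> Y,
       (forall c, u (tau1 c) = f c) -> (forall b, u (delta b) = g b) ->
       (forall c, u' (tau1 c) = f c) -> (forall b, u' (delta b) = g b) ->
       forall x, u x = u' x).

End Defs.

(* Main.v *)
Require Import Defs.
From Stdlib Require Import List Classical PropExtensionality.

Lemma relab_comp {S : signature} {A B C : Type} (f : A -> B) (g : B -> C)
  (o : option (sym S * list A)) : relab g (relab f o) = relab (fun x => g (f x)) o.
Proof. destruct o as [[a s]|]; simpl; auto. rewrite map_map; auto. Qed.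

Lemma relab_ext {S : signature} {A B : Type} (f g : A -> B)
  (o : option (sym S * list A)) : (forall x, f x = g x) -> relab f o = relab g o.
Proof. intro E. destruct o as [[a s]|]; simpl; auto. f_equal. f_equal. apply map_ext; auto. Qed.

Lemma relab_none {S : signature} {A B : Type} (f : A -> B)
  (o : option (sym S * list A)) : relab f o = None -> o = None.
Proof. destruct o as [[a s]|]; simpl; congruence. Qed.

Theorem theorem1 (S : signature) (L R G : graph S)
  (tau : node L -> node R) (sigma : node R -> option (node L))
  (m : node L -> node G)
  (HT : is_rewrite_rule tau sigma)
  (Hm : is_matching tau sigma m)
  (H : graph S) (tau1 : node G -> node H) (delta : node R -> node H)
  (Hpo : is_set_pushout tau m tau1 delta)
  (sigma1 : node H -> option (node G))
  (Hdom1 : forall n1, (exists q, sigma1 n1 = Some q) <->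
                      (exists r, sigma r <> None /\ delta r = n1))
  (Hsig1 : forall r q, sigma r = Some q -> sigma1 (delta r) = Some (m q))
  (HGamma : forall n, ~ (exists p, m p = n) -> strictly_graphic_at tau1 n)
  (HDelta : forall r, sigma r = None -> strictly_graphic_at delta r)
  (HSigma : forall n1 q, sigma1 n1 = Some q -> clone tau1 n1 q) :
  is_graph_morphism delta /\
  is_cloning_pushout tau sigma m tau1 delta sigma1.
Proof.
  destruct Hpo as [Hcomm Huniv]. destruct Hm as [Hmg _].
  assert (Hsurj : forall x, (exists c, tau1 c = x) \/ (exists b, delta b = x)).
  { destruct (Huniv Prop (fun _ => True) (fun _ => True) (fun _ => eq_refl)) as [_ U].
    intro x.
    assert (E := U (fun x => (exists c, tau1 c = x) \/ (exists b, delta b = x)) (fun _ => True)).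
    rewrite E; auto.
    - intro c; apply propositional_extensionality; split; auto; intros _; left; eauto.
    - intro b; apply propositional_extensionality; split; auto; intros _; right; eauto. }
  assert (Hdm : is_graph_morphism delta).
  { intro r. unfold graphic_at.
    destruct (sigma r) as [q|] eqn:Eq.
    - pose proof (HSigma _ _ (Hsig1 _ _ Eq)) as C. unfold clone in C.
      destruct (HT _ _ Eq) as [N|Cl]; [left; auto|].
      unfold clone in Cl.
      destruct (Hmg q) as [N2|E2].
      + left. rewrite Cl, N2; reflexivity.
      + right. rewrite Cl, C.
        rewrite E2, !relab_comp. apply relab_ext. intro; symmetry; apply Hcomm.
    - right. apply HDelta; auto. }
  assert (Hcone : is_cloning_cone tau sigma m tau1 delta sigma1).
  { split; [|split; [|split]].
    - intros n q E. right. apply HSigma; auto.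
    - split; [exact Hmg|split; [exact Hdm|split]]; auto.
    - intros n Hn. right. apply HGamma; auto.
    - exact HSigma. }
  split; [exact Hdm|split; [exact Hcone|]].
  intros H' tau1' d' sigma1' [HR' [[_ [Hd' [Hc' Hs']]] [HG' HC']]].
  destruct (Huniv _ tau1' d' Hc') as [[u [Hu1 Hu2]] Uq].
  split.
  - exists u. split; [|split; [exact Hu1|split; [exact Hu2|]]].
    +
      assert (Hdel : forall b, graphic_at u (delta b)).
      { intro b. unfold graphic_at.
        destruct (sigma b) as [q|] eqn:Eq.
        - right. pose proof (HSigma _ _ (Hsig1 _ _ Eq)) as C. unfold clone in C.
          pose proof (HC' _ _ (Hs' _ _ Eq)) as C'. unfold clone in C'.
          rewrite Hu2, C', C, relab_comp. apply relab_ext. intro; symmetry; apply Hu1.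
        - pose proof (HDelta _ Eq) as D. unfold strictly_graphic_at in D.
          rewrite D. destruct (Hd' b) as [N|E].
          + left. rewrite N; reflexivity.
          + right. rewrite Hu2, E, relab_comp. apply relab_ext. intro; symmetry; apply Hu2. }
      intro x. destruct (Hsurj x) as [[c <-]|[b <-]]; [|apply Hdel].
      destruct (classic (exists p, m p = c)) as [[p <-]|Np].
      * rewrite <- Hcomm. apply Hdel.
      * pose proof (HGamma _ Np) as D. unfold strictly_graphic_at in D.
        unfold graphic_at. rewrite D. destruct (HG' c Np) as [N|E].
        -- left. rewrite N; reflexivity.
        -- right. rewrite Hu1, E, relab_comp. apply relab_ext. intro; symmetry; apply Hu1.
    + intros x q Ex.
      destruct (proj1 (Hdom1 x) (ex_intro _ q Ex)) as [r [Nr <-]].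
      destruct (sigma r) as [q'|] eqn:Eq; [|congruence].
      rewrite (Hsig1 _ _ Eq) in Ex. injection Ex as <-.
      rewrite Hu2. apply Hs'; auto.
  - intros h h' [_ [A1 [A2 _]]] [_ [B1 [B2 _]]] n.
    apply (Uq h h'); auto.
Qed.
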